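(* Let $X$ be a finite set, $k$ an integer with $5<k<|X|-5$, $\mathfrak{C}$ a nonempty symmetric family of choice functions for $\binom{X}{k}$, and $\mathcal{F}$ the set of simple averaging functions for $\mathfrak{C}$. (1) If $f_{r;1,2}\in\mathcal{F}$ then $f_{r;\ell,k'}\in\mathcal{F}$ for all $\ell\ne k'$ in $\{1,\dots,r\}$. (2) If $f_{r;1,2}\in\mathcal{F}$ and $r=r(\mathcal{F})\ge 3$, then $f_{r+1;1,2}\in\mathcal{F}$.
   Context: $\binom{X}{k}=\{Y\subseteq X:|Y|=k\}$; choice functions $c$ satisfy $c(Y)\in Y$. Symmetric: closed under $c\mapsto \pi*c$, $(\pi*c)(Y)=\pi^{-1}(c(\pi(Y)))$ for permutations $\pi$ of $X$. $\mathcal{F}_{[r]}$: functions $f:X^r\to X$ with $f(a,\dots,a)=a$ such that for all $c_1,\dots,c_r\in\mathfrak{C}$, $Y\mapsto f(c_1(Y),\dots,c_r(Y))$ is in $\mathfrak{C}$; $\mathcal{F}=\bigcup_r\mathcal{F}_{[r]}$. A monarchy is a projection $f(\bar x)=x_t$. $r(\mathcal{F})=\min\{r:\text{some } f\in\mathcal{F}_{[r]}\text{ is not a monarchy}\}$. For $\ell\ne k'$ in $\{1,\dots,r\}$, $f_{r;\ell,k'}:X^r\to X$ is defined by $f_{r;\ell,k'}(\bar x)=x_\ell$ if $\bar x$ has a repetition and $f_{r;\ell,k'}(\bar x)=x_{k'}$ otherwise. *)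

(* Defs.v *)
From mathcomp Require Import all_boot all_order.
From mathcomp Require Import fingroup perm.
Set Implicit Arguments. Unset Strict Implicit. Unset Printing Implicit Defensive.

Section Defs.
Variables (X : finType) (k : nat).

Definition KS := {Y : {set X} | #|Y| == k}.

Definition is_choice (c : {ffun KS -> X}) : Prop := forall Y : KS, c Y \in val Y.

Lemma permKS_proof (pi : {perm X}) (Y : KS) : #|pi @: val Y| == k.
Proof. by rewrite card_imset ?(valP Y) //; exact: perm_inj. Qed.

Definition permKS (pi : {perm X}) (Y : KS) : KS := @exist {set X} (fun Z => #|Z| == k) (pi @: val Y) (permKS_proof pi Y).

Definition pact (pi : {perm X}) (c : {ffun KS -> X}) : {ffun KS -> X} :=
  [ffun Y => (pi^-1)%g (c (permKS pi Y))].

Definition symmetric_family (C : {set {ffun KS -> X}}) : Prop :=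
  forall (pi : {perm X}) c, c \in C -> pact pi c \in C.

Definition is_avg (C : {set {ffun KS -> X}}) (r : nat) (f : r.-tuple X -> X) : Prop :=
  (forall a : X, f (nseq_tuple r a) = a) /\
  (forall cs : r.-tuple {ffun KS -> X}, (forall i, tnth cs i \in C) ->
     [ffun Y : KS => f (map_tuple (fun c : {ffun KS -> X} => c Y) cs)] \in C).

Definition monarchy (r : nat) (f : r.-tuple X -> X) : Prop :=
  exists t : 'I_r, forall x, f x = tnth x t.

Definition is_rF (C : {set {ffun KS -> X}}) (r : nat) : Prop :=
  (exists f : r.-tuple X -> X, is_avg C f /\ ~ monarchy f) /\
  (forall r', r' < r -> forall f : r'.-tuple X -> X, is_avg C f -> monarchy f).
End Defs.

Definition fLK (X : finType) (r : nat) (l k' : 'I_r) (x : r.-tuple X) : X :=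
  if uniq x then tnth x k' else tnth x l.

(* The indices 1 and 2 of the paper, as 0-based ordinals of 'I_(n+2). *)
Definition idx1 (n : nat) : 'I_n.+2 := ord0.
Definition idx2 (n : nat) : 'I_n.+2 := @Ordinal n.+2 1 isT.

(* Main.v *)
Require Import Defs.
From mathcomp Require Import all_boot all_order.
From mathcomp Require Import fingroup perm.
Set Implicit Arguments. Unset Strict Implicit. Unset Printing Implicit Defensive.

Section Gen.
Variables (X : finType) (k : nat) (C : {set {ffun KS X k -> X}}).

Definition closedC m (g : m.-tuple X -> X) : Prop :=
  forall cs : m.-tuple {ffun KS X k -> X}, (forall i, tnth cs i \in C) ->
     [ffun Y : KS X k => g (map_tuple (fun c : {ffun KS X k -> X} => c Y) cs)] \in C.

Lemma closed_proj m (j : 'I_m) : closedC (fun x => tnth x j).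
Proof.
move=> cs Hcs.
have -> : [ffun Y : KS X k => tnth (map_tuple (fun c : {ffun KS X k -> X} => c Y) cs) j] = tnth cs j.
  by apply/ffunP => Y; rewrite ffunE tnth_map.
exact: Hcs.
Qed.

Lemma closed_comp r m (f : r.-tuple X -> X) (gs : 'I_r -> m.-tuple X -> X) :
  closedC f -> (forall i, closedC (gs i)) ->
  closedC (fun x => f (mktuple (fun i => gs i x))).
Proof.
move=> Hf Hg cs Hcs.
pose ds := mktuple (fun i => [ffun Y : KS X k => gs i (map_tuple (fun c : {ffun KS X k -> X} => c Y) cs)]).
have Hds : forall i, tnth ds i \in C by move=> i; rewrite tnth_mktuple; exact: Hg.
have := Hf ds Hds.
congr (_ \in C); apply/ffunP => Y; rewrite !ffunE; congr f.
by apply: eq_from_tnth => i; rewrite tnth_map !tnth_mktuple ffunE.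
Qed.

Lemma closed_ext m (g g' : m.-tuple X -> X) : (forall x, g x = g' x) -> closedC g -> closedC g'.
Proof.
move=> E Hg cs Hcs; have := Hg cs Hcs; congr (_ \in C); apply/ffunP => Y.
by rewrite !ffunE E.
Qed.

End Gen.

Lemma fLK_nseq (X : finType) r (l k' : 'I_r) a : @fLK X r l k' (nseq_tuple r a) = a.
Proof. by rewrite /fLK; case: ifP; rewrite tnth_nseq. Qed.

Lemma key_seq (X : eqType) (a b c d : X) w :
 (if uniq (a::b::c::rcons w d) then b else a) =
 (let u := if uniq (a::b::c::w) then b else a in
  let s := if uniq (b::d::c::w) then d else b in
  if uniq (a::u::s::w) then u else a).
Proof.
have EP : uniq (a::b::c::rcons w d) = uniq (a::b::c::w) && (d \notin a::b::c::w).
  by rewrite -cats1 -!cat_cons cat_uniq /= orbF andbT.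
rewrite EP.
case U: (uniq [:: a, b, c & w]); last by rewrite /= inE eqxx.
have := U; rewrite /= !inE => /and4P[/norP[ab /norP[ac aw]] /norP[bc bw] cw Uw].
rewrite /=.
rewrite (negbTE ab) (negbTE bc) (negbTE bw) (negbTE aw) (negbTE cw) Uw /= !andbT.
case: (eqVneq d b) => [->|db]; first by rewrite !eqxx /= orbT andbF.
rewrite /= !orbF.
case: (boolP (d \in w)) => dw /=; first by rewrite !orbT /= eqxx andbF.
rewrite !orbF.
case: (eqVneq d c) => [->|dc] /=; first by rewrite orbT eqxx andbF.
rewrite dw /= andbT orbF.
by case: (eqVneq d a) => [->|da]; rewrite ?eqxx //= eq_sym ?da ?db.
Qed.

Lemma val_mktuple_nat (T : Type) r (h : nat -> T) : val (mktuple (fun i : 'I_r => h (val i))) = map h (iota 0 r).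
Proof. by rewrite /= -val_enum_ord -map_comp enumT unlock. Qed.

Lemma uniq_perm_tuple (T : eqType) r (x : r.-tuple T) (s : {perm 'I_r}) :
  uniq (mktuple (fun i => tnth x (s i))) = uniq x.
Proof.
apply/tuple_uniqP/tuple_uniqP => H i j.
  move=> E; apply: (@perm_inj _ (s^-1)%g); apply: H.
  by rewrite !tnth_mktuple !permKV.
by rewrite !tnth_mktuple => /H /perm_inj.
Qed.

Lemma exists_perm2 r (i0 i1 l k' : 'I_r) : i0 != i1 -> l != k' ->
  exists s : {perm 'I_r}, s i0 = l /\ s i1 = k'.
Proof.
move=> H01 Hlk.
pose s1 := tperm i0 l.
pose s2 := tperm i1 (s1 k').
have Hk : s1 k' != i0.
  by apply: contraNneq Hlk => E; rewrite -(tpermK i0 l k') -/s1 E tpermL.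
exists (s2 * s1)%g; rewrite !permM; split.
  have e0 : s2 i0 = i0 by rewrite /s2 tpermD // eq_sym.
  by rewrite e0 /s1 tpermL.
by rewrite /s2 tpermL /s1 tpermK.
Qed.

Lemma fLK_seq (X : finType) r (t : r.+2.-tuple X) p q rest :
  val t = p :: q :: rest -> fLK (idx1 r) (idx2 r) t = if uniq (p :: q :: rest) then q else p.
Proof. by move=> Et; rewrite /fLK !(tnth_nth p) /= Et. Qed.

Lemma part2_point (X : finType) m (x : (m.+4).-tuple X) :
  let f := @fLK X m.+3 (idx1 m.+1) (idx2 m.+1) in
  let tau (j : 'I_m.+3) : 'I_m.+4 := inord (if val j == 0 then 1 else if val j == 1 then m.+3 else val j) in
  let u := fun x : (m.+4).-tuple X => f (mktuple (fun j => tnth x (widen_ord (leqnSn _) j))) in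
  let s := fun x : (m.+4).-tuple X => f (mktuple (fun j => tnth x (tau j))) in
  let gs := fun (i : 'I_m.+3) (x : (m.+4).-tuple X) =>
     if val i == 1 then u x else if val i == 2 then s x else tnth x (widen_ord (leqnSn _) i) in
  @fLK X m.+4 (idx1 m.+2) (idx2 m.+2) x = f (mktuple (fun i => gs i x)).
Proof.
move=> f tau u s gs.
pose x0 := tnth x ord0.
have [a [b [c [w [d [Ex Hw]]]]]] : exists a b c w d, val x = [:: a, b, c & rcons w d] /\ size w = m.
  case: x {f tau u s gs x0} => t Ht /=; move: (Ht) => /eqP.
  case: t Ht => [|a [|b [|c t]]] //= Ht Hsz; case/lastP: t Ht Hsz => [|w d] // _.
  by rewrite size_rcons => -[Hw]; exists a, b, c, w, d.
have Wx : map (nth x0 x) (iota 3 m) = w.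
  rewrite map_nth_iota; last by rewrite size_tuple !subSS subn0 leqnSn.
  by rewrite Ex /= -cats1 drop0 take_size_cat.
have Wg : forall h, {in iota 3 m, h =1 nth x0 x} -> map h (iota 3 m) = w.
  by move=> h H; rewrite -Wx; apply/eq_in_map.
have Eu : u x = if uniq [:: a, b, c & w] then b else a.
  apply: fLK_seq.
  rewrite (eq_mktuple (fun j : 'I_m.+3 => nth x0 x (val j))); last by move=> j; rewrite (tnth_nth x0).
  by rewrite (@val_mktuple_nat _ _ (nth x0 x)) /= Wx Ex.
have Es : s x = if uniq [:: b, d, c & w] then d else b.
  apply: fLK_seq.
  rewrite (eq_mktuple (fun j : 'I_m.+3 => nth x0 x (if val j == 0 then 1 else if val j == 1 then m.+3 else val j))); last first.
    move=> j; rewrite (tnth_nth x0) /tau inordK //.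
    case: ifP => _ //; case: ifP => _ //; exact: leqW (ltn_ord j).
  rewrite (@val_mktuple_nat _ _ (fun j => nth x0 x (if j == 0 then 1 else if j == 1 then m.+3 else j))) /=.
  rewrite Wg; last first.
    by move=> j; rewrite mem_iota => /andP[Hj _]; case: eqP Hj => [->|] //; case: eqP => [->|].
  by rewrite Ex /= nth_rcons Hw ltnn eqxx.
rewrite (@fLK_seq _ _ x a b [:: c & rcons w d]) //.
rewrite /f (@fLK_seq _ _ _ a (u x) [:: s x & w]).
  by rewrite Eu Es key_seq.
rewrite (eq_mktuple (fun j : 'I_m.+3 => (fun i => if i == 1 then u x else if i == 2 then s x else nth x0 x i) (val j))); last first.
  by move=> j; rewrite /gs (tnth_nth x0).
rewrite (@val_mktuple_nat _ _ (fun i => if i == 1 then u x else if i == 2 then s x else nth x0 x i)) /=.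
rewrite Wg; last first.
  by move=> j; rewrite mem_iota => /andP[Hj _]; case: eqP Hj => [->|] //; case: eqP => [->|].
by rewrite Ex.
Qed.

Theorem claim2p7 (X : finType) (k : nat) (C : {set {ffun KS X k -> X}}) :
  5 < k -> k + 5 < #|X| ->
  C != set0 ->
  (forall c, c \in C -> is_choice c) ->
  symmetric_family C ->
  (forall n : nat,
     is_avg C (@fLK X n.+2 (idx1 n) (idx2 n)) ->
     forall l k' : 'I_n.+2, l != k' -> is_avg C (@fLK X n.+2 l k')) /\
  (forall n : nat,
     is_avg C (@fLK X n.+2 (idx1 n) (idx2 n)) ->
     is_rF C n.+2 -> 3 <= n.+2 ->
     is_avg C (@fLK X n.+3 (idx1 n.+1) (idx2 n.+1))).
Proof.
move=> _ _ _ _ _; split.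
  move=> n [_ Hf] l k' Hlk; split; first exact: fLK_nseq.
  have [s [s0 s1]] := @exists_perm2 _ (idx1 n) (idx2 n) l k' isT Hlk.
  apply: (@closed_ext _ _ _ _ (fun x => fLK (idx1 n) (idx2 n) (mktuple (fun i => (fun j x => tnth x (s j)) i x)))).
    by move=> x; rewrite /fLK uniq_perm_tuple !tnth_mktuple s0 s1.
  apply: closed_comp => // i; exact: closed_proj.
case=> [|m] [_ Hf] _ // _; split; first exact: fLK_nseq.
apply: closed_ext; first by move=> x; rewrite (part2_point x).
apply: closed_comp => // i.
case: (val i == 1); first by apply: closed_comp => // j; exact: closed_proj.
case: (val i == 2); first by apply: closed_comp => // j; exact: closed_proj.
exact: closed_proj.
Qed.
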